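(* Let $V = V_1 \oplus \cdots \oplus V_m$ be a finite-dimensional complex vector space decomposed as a direct sum, with dual decomposition $V^* = V_1^* \oplus \cdots \oplus V_m^*$, and let $T = \mathrm{Sym}(V^* )$, $T_i = \mathrm{Sym}(V_i^* ) \subset T$. Let $d \ge 2$, let $F_i \in S^d V_i$ and $t_i \in V_i^*$ for $i=1,\dots,m$, and let $F = F_1 + \cdots + F_m \in S^d V$. For each $i$, let $J_i \subset T$ be the ideal $$J_i = (F_i^{\perp} : t_i) + (t_i) + (V_1^*, \dots, V_{i-1}^*, V_{i+1}^*, \dots, V_m^* ),$$ where $F_i^\perp$ is the perp ideal of $F_i$ in $T_i$ and $(F_i^\perp : t_i) = \{g \in T_i : t_i g \in F_i^\perp\}$ (all regarded inside $T$ via $T_i \subset T$). Then $$(F^\perp : (t_1, \dots, t_m)) \subset J_1 \cap \cdots \cap J_m .$$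
   Context: For a complex vector space $W$, $S = \mathrm{Sym}(W) = \bigoplus_d S^d W$ and $\mathrm{Sym}(W^* )$ acts on $S$ by differentiation (apolarity action: linear forms in $W^*$ act as derivations). For $F \in S^d W$, the perp ideal is $F^\perp = \{ g \in \mathrm{Sym}(W^* ) : g\cdot F = 0\}$, a homogeneous ideal. For ideals $I, J$, the ideal quotient is $(I : J) = \{g : gJ \subset I\}$; $(F^\perp : (t_1,\dots,t_m))$ is the ideal quotient of $F^\perp$ (the perp ideal of $F$ in $T$) by the ideal generated by $t_1,\dots,t_m$. *)

(* Defs.v *)
From mathcomp Require Import all_boot all_algebra.
From mathcomp Require Import Rstruct.
From mathcomp Require Import complex.
From mathcomp Require Import mpoly.

Set Implicit Arguments.
Unset Strict Implicit.
Unset Printing Implicit Defensive.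
Import GRing.Theory.
Local Open Scope ring_scope.

Notation CC := (complex Rdefinitions.R).

(* V = C^n with standard basis e_0..e_{n-1}; Sym(V) = C[x_0..x_{n-1}] and
   Sym(V^* ) = C[y_0..y_{n-1}] (y_j the dual basis).  Both are represented by
   {mpoly CC[n]}; which one is meant is clear from the role. *)

(* Apolarity action of g in Sym(V^* ) on F in Sym(V): y_j acts as d/dx_j,
   so the monomial y^mo acts as the mixed partial derivative  d^mo. *)
Definition apolar (n : nat) (g F : {mpoly CC[n]}) : {mpoly CC[n]} :=
  \sum_(mo <- msupp g) g@_mo *: mderivm mo F.

Definition perp (n : nat) (F : {mpoly CC[n]}) : {mpoly CC[n]} -> Prop :=
  fun g => apolar g F = 0.

Definition ideal_gen (n : nat) (S : {mpoly CC[n]} -> Prop) : {mpoly CC[n]} -> Prop :=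
  fun h => exists s : seq ({mpoly CC[n]} * {mpoly CC[n]}),
      (forall q, q \in s -> S q.2) /\ h = \sum_(q <- s) q.1 * q.2.

Definition colon (n : nat) (I J : {mpoly CC[n]} -> Prop) : {mpoly CC[n]} -> Prop :=
  fun g => forall h, J h -> I (g * h).

(* The decomposition V = V_1 + ... + V_m: the basis vector e_j lies in
   V_(blk j).  A polynomial lies in Sym(V_i) (resp. Sym(V_i^* )) iff
   only the variables of block i occur in it. *)
Definition in_block (n m : nat) (blk : 'I_n -> 'I_m) (i : 'I_m)
    (p : {mpoly CC[n]}) : Prop :=
  forall mo, mo \in msupp p -> forall j : 'I_n, blk j != i -> mo j = 0%N.

Definition J_gens (n m : nat) (blk : 'I_n -> 'I_m) (Fi ti : {mpoly CC[n]})
    (i : 'I_m) : {mpoly CC[n]} -> Prop :=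
  fun g => (in_block blk i g /\ perp Fi (ti * g))
           \/ g = ti
           \/ (exists j : 'I_n, blk j != i /\ g = 'X_j).

(* Main.v *)
Require Import Defs.
From mathcomp Require Import all_boot all_algebra.
From mathcomp Require Import Rstruct.
From mathcomp Require Import complex.
From mathcomp Require Import mpoly.
Local Open Scope ring_scope.
Import GRing.Theory.

Section Aux.
Variable n : nat.
Implicit Types p q F G : {mpoly CC[n]}.

Lemma apolar_seq p F (s : seq 'X_{1..n}) : uniq s -> {subset msupp p <= s} ->
  apolar p F = \sum_(mo <- s) p@_mo *: mderivm mo F.
Proof.
move=> us sub.
rewrite -(big_rmcond_in (fun mo => mo \in msupp p)); last first.
  by move=> mo _; rewrite mcoeff_msupp negbK => /eqP ->; rewrite scale0r.
rewrite -big_filter /apolar; apply: perm_big; apply: uniq_perm.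
- exact: msupp_uniq.
- exact: filter_uniq.
- by move=> x; rewrite mem_filter; case: (boolP (x \in msupp p)) => // /sub ->.
Qed.

Lemma apolarD p q F : apolar (p + q) F = apolar p F + apolar q F.
Proof.
pose s := undup (msupp p ++ msupp q).
have us : uniq s by apply: undup_uniq.
rewrite (@apolar_seq (p + q) F s) //; last first.
  by move=> x /msuppD_le; rewrite mem_undup.
rewrite (@apolar_seq p F s) //; last by move=> x xp; rewrite mem_undup mem_cat xp.
rewrite (@apolar_seq q F s) //; last by move=> x xp; rewrite mem_undup mem_cat xp orbT.
rewrite -big_split /=; apply: eq_bigr => mo _.
by rewrite mcoeffD scalerDl.
Qed.

Lemma apolar_sumr m p (F : 'I_m -> {mpoly CC[n]}) :
  apolar p (\sum_(k < m) F k) = \sum_(k < m) apolar p (F k).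
Proof.
rewrite /apolar exchange_big /=; apply: eq_bigr => mo _.
by rewrite raddf_sum scaler_sumr.
Qed.

Lemma apolar_vanish p F :
  (forall mo, mo \in msupp p -> exists j, (0 < mo j)%N /\
     forall m', m' \in msupp F -> m' j = 0%N) ->
  apolar p F = 0.
Proof.
move=> H; rewrite /apolar big1_seq // => mo /andP [_ mop].
have [j [pos z]] := H mo mop.
suff -> : mderivm mo F = 0 by rewrite scaler0.
apply/mpolyP => m'; rewrite mcoeff_mderivm mcoeff0.
case: (boolP ((mo + m')%MM \in msupp F)) => [/z|/memN_msupp_eq0 -> ]; last by rewrite mul0rn.
by rewrite mnmDE => /eqP; rewrite addn_eq0 => /andP [/eqP h _]; rewrite h in pos.
Qed.


Lemma supp_mul p q mo : mo \in msupp (p * q) ->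
  exists m1 m2, [/\ m1 \in msupp p, m2 \in msupp q & mo = (m1 + m2)%MM].
Proof.
move/msuppM_le/allpairsP => [[m1 m2] /= [h1 h2 ->]].
by exists m1, m2.
Qed.

Lemma supp_filter (P : pred 'X_{1..n}) (g : {mpoly CC[n]}) mo :
  mo \in msupp (\sum_(m <- msupp g | P m) g@_m *: 'X_[m] : {mpoly CC[n]}) -> P mo.
Proof.
move/msupp_sum_le/flattenP => [s /mapP [x]].
rewrite mem_filter => /andP [Px _] -> /msuppZ_le.
by rewrite msuppX mem_seq1 => /eqP ->.
Qed.

Lemma homog1_var p mo : p \is [in CC[n], 1.-homog] -> mo \in msupp p ->
  exists j, (0 < mo j)%N.
Proof.
move=> /dhomogP h /h hm.
case: (boolP [exists j, 0 < mo j]%N) => [/existsP [j hj]|]; first by exists j.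
rewrite negb_exists => /forallP H.
have : mo = 0%MM by apply/mnmP => j; rewrite mnm0E; move: (H j); rewrite lt0n negbK => /eqP.
have hd : mdeg mo = 1%N := hm.
by move=> e; rewrite e mdeg0 in hd.
Qed.

End Aux.

Section Ideal.
Variable n : nat.
Variable S : {mpoly CC[n]} -> Prop.

Lemma ideal0 : ideal_gen S 0.
Proof. by exists [::]; split => //; rewrite big_nil. Qed.

Lemma idealD a b : ideal_gen S a -> ideal_gen S b -> ideal_gen S (a + b).
Proof.
move=> [s1 [h1 ->]] [s2 [h2 ->]]; exists (s1 ++ s2); split; last by rewrite big_cat.
by move=> q; rewrite mem_cat => /orP [/h1|/h2].
Qed.

Lemma idealM c s : S s -> ideal_gen S (c * s).
Proof. by move=> h; exists [:: (c, s)]; split; [move=> q; rewrite mem_seq1 => /eqP -> | rewrite big_seq1]. Qed.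

End Ideal.

Theorem mainTheorem1 (n m d : nat) (blk : 'I_n -> 'I_m)
    (F t : 'I_m -> {mpoly CC[n]}) :
  (2 <= d)%N ->
  (forall i, F i \is [in CC[n], d.-homog] /\ in_block blk i (F i)) ->
  (forall i, t i \is [in CC[n], 1.-homog] /\ in_block blk i (t i)) ->
  forall g : {mpoly CC[n]},
    colon (perp (\sum_(i < m) F i)) (ideal_gen (fun h => exists i, h = t i)) g ->
    forall i : 'I_m, ideal_gen (J_gens blk (F i) (t i) i) g.
Proof.
move=> _ HF Ht g Hg i.
pose P := fun mo : 'X_{1..n} => [forall j, (blk j != i) ==> (mo j == 0%N)].
pose gi := \sum_(mo <- msupp g | P mo) g@_mo *: 'X_[mo].
pose r := \sum_(mo <- msupp g | ~~ P mo) g@_mo *: 'X_[mo].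
have eg : g = gi + r by rewrite /gi /r {1}[g]mpolyE (bigID P).
have rP : forall mo, mo \in msupp r -> exists j, blk j != i /\ (0 < mo j)%N.
  move=> mo /(@supp_filter n); rewrite negb_forall => /existsP [j].
  by rewrite negb_imply => /andP [bj mj]; exists j; rewrite lt0n.
have tP : forall q mo, mo \in msupp (t i * q) ->
    exists j, blk j = i /\ (0 < mo j)%N.
  move=> q mo /(@supp_mul n) [m1 [m2 [h1 h2 ->]]].
  have [j hj] := @homog1_var n _ _ (Ht i).1 h1.
  exists j; split; last by rewrite mnmDE ltn_addr.
  apply/eqP; apply/negP => /negP bj.
  by move: ((Ht i).2 m1 h1 j bj) hj => ->.
have rI : ideal_gen (J_gens blk (F i) (t i) i) r.
  rewrite /r big_seq_cond; apply: (big_ind (ideal_gen _)).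
  - exact: ideal0.
  - exact: idealD.
  move=> mo /andP [_ nP]; move: nP; rewrite negb_forall => /existsP [j].
  rewrite negb_imply => /andP [bj mj].
  have -> : mo = (U_(j) + (mo - U_(j)))%MM.
    apply/mnmP => k; rewrite mnmDE mnmBE mnm1E.
    case: (j =P k) => [<-|_]; last by rewrite subn0.
    by move: mj; rewrite -lt0n => h; rewrite add1n subn1 prednK.
  rewrite mpolyXD (mulrC 'X_j) -mul_mpolyC mulrA; apply: idealM.
  by right; right; exists j.
have tgi : perp (F i) (t i * gi).
  have H := Hg (t i) (eq_ind _ _ (@idealM _ (fun h => exists i, h = t i) 1 (t i) (ex_intro _ i erefl)) _ (mul1r (t i))).
  move: H; rewrite /perp mulrC eg mulrDr apolarD !apolar_sumr.
  rewrite [X in _ + X]big1 ?addr0; last first.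
    move=> k _; apply: apolar_vanish => mo hmo.
    have [j [bj pj]] := tP _ _ hmo.
    case: (eqVneq k i) => [ek|nk].
      have [m1 [m2 [h1 h2 e]]] := @supp_mul n _ _ _ hmo.
      have [j' [bj' pj']] := rP _ h2.
      exists j'; split; first by rewrite e mnmDE ltn_addl.
      by move=> m' hm'; apply: ((HF k).2 _ hm' j'); rewrite ek.
    exists j; split => // m' hm'; apply: ((HF k).2 _ hm' j); rewrite bj eq_sym.
    exact: nk.
  rewrite (bigD1 i) //= big1 ?addr0 //.
  move=> k nk; apply: apolar_vanish => mo hmo.
  have [j [bj pj]] := tP _ _ hmo.
  exists j; split => // m' hm'; apply: ((HF k).2 _ hm' j); rewrite bj eq_sym.
  exact: nk.
rewrite eg -[gi]mul1r; apply: idealD => //; apply: idealM.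
left; split => //.
move=> mo /(@supp_filter n) /forallP Pm j bj.
by apply/eqP; move: (Pm j); rewrite bj.
Qed.
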